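(* Let $(M,\mathcal T)$ be a closed pseudo 3-manifold with edge set $E$. If a solution $l(t)$ of the extended Ricci flow $\frac{d}{dt}l(t)=\widetilde K(l(t))$ converges to some $\widetilde l\in\mathbb R^E$ as $t\to+\infty$, then $\widetilde K(\widetilde l)=0$.
   Context: Closed pseudo 3-manifold $(M,\mathcal T)$: quotient of a disjoint union $\mathscr T$ of finitely many tetrahedra by affine isomorphisms pairing faces, every 2-face being paired with another; $E$ is the set of edge classes. For a tetrahedron $\sigma$ with vertices $v_1,\dots,v_4$ and $l\in\mathbb R^E$, $l_\sigma=(l_{ij})\in\mathbb R^6$, $l_{ij}=l(\text{class of } v_iv_j)$. Extended dihedral angles: for $(x_1,x_2,x_3)\in\mathbb R^3_{>0}$, $a_i$ is the Euclidean angle opposite $x_i$ if strict triangle inequalities hold, and $a_i=\pi$, $a_j=a_k=0$ if $x_i\ge x_j+x_k$. For $l\in\mathbb R^6$, $\{i,j,k,h\}=\{1,2,3,4\}$, $\alpha_{ij}(l)$ is the generalized angle opposite the side $e^{(l_{ij}+l_{kh})/2}$ in the generalized triangle with sides $e^{(l_{ij}+l_{kh})/2},e^{(l_{ik}+l_{jh})/2},e^{(l_{ih}+l_{jk})/2}$. The generalized Ricci curvature of $l\in\mathbb R^E$ is $\widetilde K_e(l)=2\pi-\sum\alpha_{ij}(l_\sigma)$, summed over pairs (tetrahedron $\sigma$, edge $v_iv_j$ of $\sigma$ in class $e$). *)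

(* Defs.v *)
From HB Require Import structures.
From mathcomp Require Import all_boot all_order all_algebra all_fingroup.
From mathcomp Require Import all_classical all_reals all_analysis.
Set Implicit Arguments. Unset Strict Implicit. Unset Printing Implicit Defensive.
Import Order.TTheory GRing.Theory Num.Theory.
Local Open Scope ring_scope.

(* Closed pseudo 3-manifold (M,T): tetrahedra 'I_ntet with vertices 'I_4.   *)
(* Face f of tetrahedron s is the face opposite vertex f.  Face f of s is   *)
(* glued to face (pair_face s f) of tetrahedron (pair_tet s f) by the affine *)
(* isomorphism determined by the vertex bijection (pair_map s f) (restricted *)
(* to the face).  Every face is paired with another face; the pairing is an  *)
(* involution.  E is the set of edge classes and ecls s i j is the class of  *)
(* the edge v_i v_j of s (i <> j), the classes being exactly the classes of *)
(* the equivalence relation generated by the face gluings.                  *)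

Definition node (n : nat) := ('I_n * 'I_4 * 'I_4)%type.

Definition glue_step (n : nat) (pt : 'I_n -> 'I_4 -> 'I_n)
  (pm : 'I_n -> 'I_4 -> {perm 'I_4}) (x y : node n) : bool :=
  let: (s, i, j) := x in
  (y == (s, j, i)) ||
  [exists f : 'I_4, [&& i != f, j != f & y == (pt s f, pm s f i, pm s f j)]].

Definition glue_rel (n : nat) pt pm : rel (node n) :=
  fun x y => @glue_step n pt pm x y || @glue_step n pt pm y x.

Record pseudo3 := Pseudo3 {
  ntet : nat;
  E : finType;
  pair_tet : 'I_ntet -> 'I_4 -> 'I_ntet;
  pair_face : 'I_ntet -> 'I_4 -> 'I_4;
  pair_map : 'I_ntet -> 'I_4 -> {perm 'I_4};
  ecls : 'I_ntet -> 'I_4 -> 'I_4 -> E;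
  pair_map_face : forall s f, pair_map s f f = pair_face s f;
  pair_other : forall s f, (pair_tet s f, pair_face s f) != (s, f);
  pair_tet_invol : forall s f,
    pair_tet (pair_tet s f) (pair_face s f) = s;
  pair_face_invol : forall s f,
    pair_face (pair_tet s f) (pair_face s f) = f;
  pair_map_invol : forall s f,
    pair_map (pair_tet s f) (pair_face s f) = (pair_map s f)^-1%g;
  ecls_quotient : forall s i j s' i' j', i != j -> i' != j' ->
    (ecls s i j == ecls s' i' j') =
    connect (glue_rel pair_tet pair_map) (s, i, j) (s', i', j');
  ecls_surj : forall e : E, exists s i j, i != j /\ ecls s i j = e
}.

Definition ext_angle (R : realType) (a b c : R) : R :=
  if b + c <= a then pi
  else if (a + c <= b) || (a + b <= c) then 0
  else acos ((b ^+ 2 + c ^+ 2 - a ^+ 2) / (2 * b * c)).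

Definition side (R : realType) (l : 'I_4 -> 'I_4 -> R) (i j k h : 'I_4) : R :=
  expR ((l i j + l k h) / 2).

(* alpha_ij(l) with {i,j,k,h} = {1,2,3,4} *)
Definition alpha (R : realType) (l : 'I_4 -> 'I_4 -> R) (i j k h : 'I_4) : R :=
  ext_angle (side l i j k h) (side l i k j h) (side l i h j k).

Definition v0 : 'I_4 := @Ordinal 4 0 isT.
Definition v1 : 'I_4 := @Ordinal 4 1 isT.
Definition v2 : 'I_4 := @Ordinal 4 2 isT.
Definition v3 : 'I_4 := @Ordinal 4 3 isT.

Definition tet_edges : seq ('I_4 * 'I_4 * 'I_4 * 'I_4) :=
  [:: (v0, v1, v2, v3); (v0, v2, v1, v3); (v0, v3, v1, v2);
      (v1, v2, v0, v3); (v1, v3, v0, v2); (v2, v3, v0, v1)].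

Definition lsig (T : pseudo3) (R : realType) (l : E T -> R) (s : 'I_(ntet T))
  : 'I_4 -> 'I_4 -> R := fun i j => l (ecls s i j).

Definition Ktilde (T : pseudo3) (R : realType) (l : E T -> R) (e : E T) : R :=
  2 * pi - \sum_(s < ntet T)
     \sum_(q <- tet_edges | ecls s q.1.1.1 q.1.1.2 == e)
        alpha (lsig l s) q.1.1.1 q.1.1.2 q.1.2 q.2.

(* Main.v *)
Require Import Defs.
From HB Require Import structures.
From mathcomp Require Import all_boot all_order all_algebra all_fingroup.
From mathcomp Require Import all_classical all_reals all_analysis.
Import Order.TTheory GRing.Theory Num.Theory.
Import numFieldNormedType.Exports.
Local Open Scope classical_set_scope.
Local Open Scope ring_scope.

Lemma acos_near1 (R : realType) (eps : R) : 0 < eps ->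
  exists2 d : R, 0 < d & forall x, 1 - d < x -> x <= 1 -> acos x < eps.
Proof.
move=> e0.
pose e' := Num.min eps pi.
have e'0 : 0 < e' by rewrite lt_min e0 (pi_gt0 R).
have e'pi : e' <= pi by rewrite ge_min lexx orbT.
have e'le : e' <= eps by rewrite ge_min lexx.
have ce : cos e' < 1.
  have : cos e' < cos 0.
    by rewrite ltr_cos // !in_itv /= ?lexx ?(ltW e'0) ?e'pi ?(ltW (pi_gt0 R)) //= (ltW (pi_gt0 R)).
  by rewrite cos0.
exists (1 - cos e'); first by rewrite subr_gt0.
move=> x hx x1.
rewrite opprB addrC subrK in hx.
have xin : -1 <= x <= 1 by rewrite x1 andbT (le_trans (cos_geN1 e')) // ltW.
apply: (lt_le_trans _ e'le).
rewrite -ltr_cos ?acosK //.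
- by rewrite in_itv /= acos_ge0 // acos_lepi.
- by rewrite in_itv /= (ltW e'0) e'pi.
Qed.

Arguments acos_near1 {R}.
Definition clampr {R : realType} (x : R) : R := Num.max (-1) (Num.min 1 x).
Definition Gf {R : realType} (x : R) : R := acos (clampr x).

Lemma clamp_in {R : realType} (x : R) : -1 <= clampr x <= 1.
Proof.
rewrite /clampr le_max lexx /= ge_max ge_min lexx /=. by rewrite andbT -subr_ge0 opprK addr_ge0 // ler01.
Qed.

Lemma clamp_gt (R : realType) (a x : R) : a < 1 -> a < x -> a < clampr x.
Proof. by move=> h1 h2; rewrite /clampr lt_max lt_min h1 h2 orbT. Qed.

Lemma clamp_lt (R : realType) (b x : R) : -1 < b -> x < b -> clampr x < b.
Proof. by move=> h1 h2; rewrite /clampr gt_max gt_min h1 h2 orbT. Qed.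

Lemma clamp_id (R : realType) (x : R) : -1 <= x -> x <= 1 -> clampr x = x.
Proof. by move=> h1 h2; rewrite /clampr min_r // max_r. Qed.

Lemma Gf_cont (R : realType) (x0 : R) : {for x0, continuous (@Gf R)}.
Proof.
have m11 : (-1 : R) < 1 by rewrite -subr_gt0 opprK addr_gt0 // ltr01.
case: (ltP x0 1) => h1; case: (ltP (-1) x0) => h2.
- have E : {near x0, acos =1 @Gf R}.
    near=> x.
    have : x \in `](-1), 1[ by near: x; apply: near_in_itvoo; rewrite in_itv /= h1 h2.
    rewrite in_itv /= => /andP[a b].
    by rewrite /Gf clamp_id // ltW.
  apply: cvg_trans (near_eq_cvg E) _.
  rewrite /Gf clamp_id ?ltW //.
  by apply: continuous_acos; rewrite h1 h2.
- have Gx0 : Gf x0 = pi by rewrite /Gf /clampr min_r ?(ltW h1) // max_l // acosN1.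
  apply/cvgrPdist_lt => e e0; rewrite Gx0.
  have [d d0 hd] := acos_near1 _ e0.
  near=> x.
  have : x \in `](x0 - 1), (-1 + d)[.
    near: x; apply: near_in_itvoo; rewrite in_itv /=.
    rewrite ltrBlDr ltrDl ltr01 /=.
    by apply: (le_lt_trans h2); rewrite ltrDl.
  rewrite in_itv /= => /andP[_ b].
  have c1 := clamp_in x.
  have c2 : clampr x < -1 + d by apply: clamp_lt => //; rewrite ltrDl.
  have hin : -1 <= - clampr x <= 1.
    by move: c1 => /andP[u v]; rewrite lerNr opprK v /= lerNl.
  rewrite /Gf -[clampr x]opprK acosN // opprB addrC subrK.
  rewrite ger0_norm ?acos_ge0 //.
  apply: hd; last by case/andP: hin.
  by rewrite ltrNr opprB addrC.
- have Gx0 : Gf x0 = 0.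
    by rewrite /Gf /clampr min_l // max_r ?acos1 // ltW.
  apply/cvgrPdist_lt => e e0; rewrite Gx0.
  have [d d0 hd] := acos_near1 _ e0.
  near=> x.
  have : x \in `](1 - d), (x0 + 1)[.
    near: x; apply: near_in_itvoo; rewrite in_itv /=.
    rewrite ltrDl ltr01 andbT.
    by apply: (lt_le_trans _ h1); rewrite ltrBlDr ltrDl.
  rewrite in_itv /= => /andP[a _].
  have c1 := clamp_in x.
  rewrite sub0r normrN ger0_norm ?acos_ge0 //.
  apply: hd; last by case/andP: c1.
  by apply: clamp_gt => //; rewrite ltrBlDr ltrDl.
- exfalso.
  by have := le_lt_trans (le_trans h1 h2) m11; rewrite ltxx.
Unshelve. all: by end_near.
Qed.

From mathcomp Require Import lra.

Lemma ext_angleE (R : realType) (a b c : R) : 0 < a -> 0 < b -> 0 < c ->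
  ext_angle a b c = Gf ((b ^+ 2 + c ^+ 2 - a ^+ 2) / (2 * b * c)).
Proof.
move=> a0 b0 c0.
have bc0 : 0 < 2 * b * c by rewrite !mulr_gt0 // ltr0n.
rewrite /ext_angle /Gf; case: ifP => H1.
  have r1 : (b ^+ 2 + c ^+ 2 - a ^+ 2) / (2 * b * c) <= -1.
    rewrite ler_pdivrMr //; nra.
  rewrite /clampr min_r; last by apply: (le_trans r1); lra.
  by rewrite max_l // acosN1.
case: ifP => H2.
  have r1 : 1 <= (b ^+ 2 + c ^+ 2 - a ^+ 2) / (2 * b * c).
    rewrite ler_pdivlMr // mul1r.
    by case/orP: H2 => H2; nra.
  rewrite /clampr min_l // max_r ?acos1 //; lra.
rewrite clamp_id //.
- rewrite ler_pdivlMr //; move/negbT: H1; rewrite -ltNge => H1; nra.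
- move/negbT: H2; rewrite negb_or -!ltNge => /andP[H2 H3].
  rewrite ler_pdivrMr // mul1r; nra.
Qed.

Lemma cvg_ext_angle (R : realType) (T : Type) (F : set_system T) (FF : Filter F)
  (fa fb fc : T -> R) (a b c : R) :
  0 < a -> 0 < b -> 0 < c ->
  (forall t, 0 < fa t) -> (forall t, 0 < fb t) -> (forall t, 0 < fc t) ->
  fa @ F --> a -> fb @ F --> b -> fc @ F --> c ->
  (fun t => ext_angle (fa t) (fb t) (fc t)) @ F --> ext_angle a b c.
Proof.
move=> a0 b0 c0 pa pb pc ca cb cc.
have -> : (fun t => ext_angle (fa t) (fb t) (fc t)) =
  Gf \o (fun t => (fb t * fb t + fc t * fc t - fa t * fa t) * (2 * fb t * fc t)^-1).
  by apply: funext => t /=; rewrite ext_angleE // !expr2.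
rewrite ext_angleE // !expr2.
apply: continuous_cvg; first exact: Gf_cont.
apply: cvgM.
  apply: cvgB; first apply: cvgD; apply: cvgM => //.
apply: cvgV; first by rewrite !mulf_neq0 ?gt_eqF ?ltr0n.
apply: cvgM => //; apply: cvgM => //; exact: cvg_cst.
Qed.

Lemma cvg_sumR (R : realType) (I : Type) (X : Type) (F : set_system X) (FF : Filter F)
  (r : seq I) (P : pred I) (f : I -> X -> R) (a : I -> R) :
  (forall i, P i -> f i @ F --> a i) ->
  (fun x => \sum_(i <- r | P i) f i x) @ F --> \sum_(i <- r | P i) a i.
Proof.
move=> h; apply: cvg_big => //.
exact: add_continuous.
Qed.

Lemma cvg_Ktilde (T : pseudo3) (R : realType) (X : Type) (F : set_system X)
  (FF : Filter F) (L : X -> E T -> R) (lt : E T -> R) :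
  (forall e, (fun t => L t e) @ F --> lt e) ->
  forall e, (fun t => Ktilde (L t) e) @ F --> Ktilde lt e.
Proof.
move=> h e; rewrite /Ktilde.
apply: cvgB; first exact: cvg_cst.
apply: cvg_sumR => s _.
apply: cvg_sumR => q _.
rewrite /alpha /side /lsig.
have cs : forall i j k m : 'I_4,
    (fun t => expR ((L t (ecls s i j) + L t (ecls s k m)) / 2)) @ F -->
      expR ((lt (ecls s i j) + lt (ecls s k m)) / 2).
  move=> i j k m.
  apply: (continuous_cvg _ (h := expR)); first exact: continuous_expR.
  apply: cvgM; last exact: cvg_cst.
  by apply: cvgD; apply: h.
by apply: cvg_ext_angle => // *; apply: expR_gt0.
Qed.

Theorem mainTheorem10 (R : realType) (T : pseudo3) (l : R -> E T -> R)
  (lt : E T -> R) :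
  (forall t : R, 0 < t -> forall e : E T,
     is_derive t 1 (fun u : R => l u e) (Ktilde (l t) e)) ->
  (forall e : E T, l t e @[t --> +oo%R] --> lt e) ->
  forall e : E T, Ktilde lt e = 0.
Proof.
move=> hd hc e.
have hK : Ktilde (l t) e @[t --> +oo] --> Ktilde lt e by apply: cvg_Ktilde.
set c := Ktilde lt e in hK *.
apply/eqP; apply/negPn/negP => cn0.
have ac : 0 < `|c| by rewrite normr_gt0.
pose eps := `|c| / 2.
have eps0 : 0 < eps by rewrite divr_gt0.
have [M1 [_ HM1]] := proj1 (cvgrPdist_lt _ _) hK eps eps0.
have eps20 : 0 < eps / 2 by rewrite divr_gt0.
have [M2 [_ HM2]] := proj1 (cvgrPdist_lt _ _) (hc e) (eps / 2) eps20.
pose t := Num.max (Num.max M1 M2) 0 + 1.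
have hm1 : M1 <= Num.max (Num.max M1 M2) 0 by rewrite !le_max lexx.
have hm2 : M2 <= Num.max (Num.max M1 M2) 0 by rewrite !le_max lexx orbT.
have hm0 : 0 <= Num.max (Num.max M1 M2) 0 by rewrite !le_max lexx orbT.
have tM1 : M1 < t by rewrite /t; lra.
have tM2 : M2 < t by rewrite /t; lra.
have t0 : 0 < t by rewrite /t; lra.
have hder : forall x, x \in `]t, (t + 1)[ ->
    is_derive x 1 (fun u => l u e) (Ktilde (l x) e).
  move=> x; rewrite in_itv /= => /andP[x1 _]; apply: hd; exact: lt_trans x1.
have hcont : {within `[t, (t + 1)], continuous (fun u => l u e)}.
  apply: derivable_within_continuous => x; rewrite in_itv /= => /andP[x1 _].
  by case: (hd x (lt_le_trans t0 x1) e).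
have [xi xin Hmvt] := MVT (ltr_pwDr ltr01 (lexx t)) hder hcont.
move: xin; rewrite in_itv /= => /andP[xi1 xi2].
have := HM1 xi (lt_trans tM1 xi1).
have := HM2 t tM2.
have := HM2 (t + 1) (lt_trans tM2 (ltr_pwDr ltr01 (lexx t))).
rewrite !ltr_distlC.
have e1 : t + 1 - t = 1 by lra.
move: Hmvt; rewrite e1 mulr1 /eps => Hmvt.
case: (ltgtP c 0) => [cneg|cpos|c0].
- rewrite ltr0_norm //.
  move=> /andP[a1 a2] /andP[b1 b2] /andP[c1 c2]; lra.
- rewrite gtr0_norm //.
  move=> /andP[a1 a2] /andP[b1 b2] /andP[c1 c2]; lra.
- by rewrite c0 eqxx in cn0.
Qed.
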